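(* Let $p\ge4$ and let $\vec r:\mathbb{Z}\to\mathbb{R}^3$ be a discrete centroaffine space curve which is closed with period $p$ and has $\tau_k=0$ for all $k$. Let $S$ be the $p\times p$ real matrix whose $n$-th row ($n=1,\dots,p$) has entry $\kappa_n$ in column $n-1$, entry $-\kappa_n-\bar\kappa_n$ in column $n$, entry $1+\bar\kappa_n$ in column $n+1$, entry $-1$ in column $n+2$ (column indices taken modulo $p$ in $\{1,\dots,p\}$), and zeros elsewhere. Then $\operatorname{rank}S=p-3$.
   Context: A discrete centroaffine space curve is a map $\vec r:\mathbb{Z}\to\mathbb{R}^3$ with $[\vec r_{k-1},\vec r_k,\vec r_{k+1}]\ne0$ for all $k$, where $\vec r_k=\vec r(k)$, $[\cdot,\cdot,\cdot]$ is the $3\times3$ determinant and $\vec t_k=\vec r_{k+1}-\vec r_k$. With $D_k=[\vec r_{k-1},\vec r_k,\vec r_{k+1}]$: $\kappa_k=\frac{[\vec r_k,\vec r_{k+1},\vec r_{k+2}]}{D_k}$, $\bar\kappa_k=\frac{[\vec r_{k+1},\vec t_{k-1},\vec t_{k+1}]}{D_k}$, $\tau_k=\frac{[\vec t_{k-1},\vec t_k,\vec t_{k+1}]}{D_k}$. Closed with period $p$: $\vec r(k+p)=\vec r(k)$ for all $k$, $p$ minimal. *)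

(* Defs.v *)
(* the statement is purely algebraic (determinants, rank),
   stated over an arbitrary real field R (the paper's case is R = reals). *)
From HB Require Import structures.
From mathcomp Require Import all_boot all_order all_algebra.
Set Implicit Arguments. Unset Strict Implicit. Unset Printing Implicit Defensive.
Import Order.TTheory GRing.Theory Num.Theory.
Local Open Scope ring_scope.

Definition det3 (R : realFieldType) (a b c : 'rV[R]_3) : R :=
  \det (\matrix_(i < 3, j < 3)
          (if i == 0 :> nat then a 0 j else if i == 1 :> nat then b 0 j else c 0 j)).

Section Curve.
Variable R : realFieldType.
Variable r : int -> 'rV[R]_3.

Definition tvec (k : int) : 'rV[R]_3 := r (k + 1) - r k.

Definition Dk (k : int) : R := det3 (r (k - 1)) (r k) (r (k + 1)).

Definition kappa (k : int) : R := det3 (r k) (r (k + 1)) (r (k + 2)) / Dk k.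

Definition kappabar (k : int) : R :=
  det3 (r (k + 1)) (tvec (k - 1)) (tvec (k + 1)) / Dk k.

Definition tau (k : int) : R := det3 (tvec (k - 1)) (tvec k) (tvec (k + 1)) / Dk k.

Definition centroaffine_curve : Prop := forall k : int, Dk k != 0.

Definition closed_with_period (p : nat) : Prop :=
  (0 < p)%N /\ (forall k : int, r (k + p%:Z) = r k) /\
  (forall q : nat, (0 < q)%N -> (q < p)%N -> exists k : int, r (k + q%:Z) <> r k).

Definition Smat (p : nat) : 'M[R]_p :=
  \matrix_(i < p, j < p)
    (let n : int := (i.+1)%:Z in
     if (j : nat) == ((i + p - 1) %% p)%N then kappa n
     else if (j : nat) == i then - kappa n - kappabar n
     else if (j : nat) == ((i + 1) %% p)%N then 1 + kappabar n
     else if (j : nat) == ((i + 2) %% p)%N then -1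
     else 0).
End Curve.

(* Main.v *)
Require Import Defs.
From HB Require Import structures.
From mathcomp Require Import all_boot all_order all_algebra.
From mathcomp Require Import ring zify.
Set Implicit Arguments. Unset Strict Implicit. Unset Printing Implicit Defensive.
Import Order.TTheory GRing.Theory Num.Theory.
Local Open Scope ring_scope.

Lemma det22 (R : comNzRingType) (M : 'M[R]_2) : \det M = M 0 0 * M 1 1 - M 0 1 * M 1 0.
Proof.
rewrite (expand_det_row _ 0) !big_ord_recl big_ord0 /cofactor !det_mx11 !mxE /=.
pose N (a b : nat) := M (inord a) (inord b).
have HM i j : M i j = N i j by rewrite /N !inord_val.
rewrite !HM /=. rewrite /bump /=. ring.
Qed.
Lemma det33 (R : comNzRingType) (M : 'M[R]_3) : \det M =
  M 0 0 * (M 1 1 * M 2 2 - M 1 2 * M 2 1)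
 - M 0 1 * (M 1 0 * M 2 2 - M 1 2 * M 2 0)
 + M 0 2 * (M 1 0 * M 2 1 - M 1 1 * M 2 0).
Proof.
rewrite (expand_det_row _ 0) !big_ord_recl big_ord0 /cofactor !det22 !mxE /=.
pose N (a b : nat) := M (inord a) (inord b).
have HM i j : M i j = N i j by rewrite /N !inord_val.
rewrite !HM /=. rewrite /bump /=. ring.
Qed.
Lemma key (R : realFieldType) (a b c e : 'rV[R]_3) (j : 'I_3) :
  det3 a b c != 0 -> det3 (b - a) (c - b) (e - c) = 0 ->
  let D := det3 a b c in let K := det3 b c e / D in let Kb := det3 c (b - a) (e - c) / D in
  K * a 0 j - (K + Kb) * b 0 j + (1 + Kb) * c 0 j - e 0 j = 0.
Proof.
move=> hD hT D K Kb.
have H : K * a 0 j - (K + Kb) * b 0 j + (1 + Kb) * c 0 j - e 0 j =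
  - det3 (b - a) (c - b) (e - c) * c 0 j / D.
  rewrite /K /Kb /D; clear K Kb D hT; move: hD; rewrite /det3 !det33 !mxE /= => hD.
  have [->|[->|->]] : j = 0 \/ j = 1 \/ j = 2 by case: j => [[|[|[|//]]] hj]; [left|right;left|right;right]; apply/val_inj.
  all: move: hD; generalize (a 0 0) (a 0 1) (a 0 2) (b 0 0) (b 0 1) (b 0 2) (c 0 0) (c 0 1) (c 0 2) (e 0 0) (e 0 1) (e 0 2) => a0 a1 a2 b0 b1 b2 c0 c1 c2 e0 e1 e2 hD.
  1-3: by field; exact: hD.
by rewrite H hT oppr0 !mul0r.
Qed.

Lemma sum1 (R : comNzRingType) n v (F : 'I_n.+1 -> R) (x : R) : (v < n.+1)%N ->
  \sum_(c < n.+1) (((c : nat) == v)%:R * x) * F c = x * F (inord v).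
Proof.
move=> hv; rewrite (bigD1 (inord v)) //= inordK // eqxx mul1r big1 ?addr0 // => c hc.
have hcv : (c : nat) != v.
  apply: contra hc => /eqP hc; apply/eqP/val_inj; by rewrite /= inordK.
by rewrite (negbTE hcv) mul0r mul0r.
Qed.

Lemma sum4 (R : comNzRingType) n (v1 v2 v3 v4 : nat) (F : 'I_n.+1 -> R) (x1 x2 x3 x4 : R) :
  (v1 < n.+1)%N -> (v2 < n.+1)%N -> (v3 < n.+1)%N -> (v4 < n.+1)%N ->
  v1 != v2 -> v1 != v3 -> v1 != v4 -> v2 != v3 -> v2 != v4 -> v3 != v4 ->
  \sum_(c < n.+1) (if (c : nat) == v1 then x1 else if (c : nat) == v2 then x2
     else if (c : nat) == v3 then x3 else if (c : nat) == v4 then x4 else 0) * F c =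
  x1 * F (inord v1) + x2 * F (inord v2) + x3 * F (inord v3) + x4 * F (inord v4).
Proof.
move=> h1 h2 h3 h4 d12 d13 d14 d23 d24 d34.
have d21 : v2 != v1 by rewrite eq_sym.
have d31 : v3 != v1 by rewrite eq_sym.
have d41 : v4 != v1 by rewrite eq_sym.
have d32 : v3 != v2 by rewrite eq_sym.
have d42 : v4 != v2 by rewrite eq_sym.
have d43 : v4 != v3 by rewrite eq_sym.
rewrite -!sum1 // -!big_split /=; apply: eq_bigr => c _.
have [->|n1] := eqVneq (c : nat) v1.
  by rewrite ?eqxx !(negbTE d12, negbTE d13, negbTE d14) /= ?mulr1n ?mulr0n; ring.
have [->|n2] := eqVneq (c : nat) v2.
  by rewrite ?eqxx !(negbTE d21, negbTE d23, negbTE d24) /= ?mulr1n ?mulr0n; ring.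
have [->|n3] := eqVneq (c : nat) v3.
  by rewrite ?eqxx !(negbTE d31, negbTE d32, negbTE d34) /= ?mulr1n ?mulr0n; ring.
by case: eqP => _ /=; rewrite ?mulr1n ?mulr0n; ring.
Qed.

Lemma rec_rel (R : realFieldType) (r : int -> 'rV[R]_3) (k : int) (j : 'I_3) :
  centroaffine_curve r -> tau r k = 0 ->
  kappa r k * r (k - 1) 0 j - (kappa r k + kappabar r k) * r k 0 j
  + (1 + kappabar r k) * r (k + 1) 0 j - r (k + 2) 0 j = 0.
Proof.
move=> hD htau.
have e1 : k - 1 + 1 = k by rewrite subrK.
have e2 : k + 1 + 1 = k + 2 by rewrite -addrA.
have hT : det3 (r k - r (k - 1)) (r (k + 1) - r k) (r (k + 2) - r (k + 1)) = 0.
  move: htau; rewrite /tau /tvec e1 e2 => /eqP; rewrite mulf_eq0 invr_eq0.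
  by rewrite (negbTE (hD k)) orbF => /eqP.
have := key j (hD k) hT.
by rewrite /kappa /kappabar /tvec e1 e2 /Dk.
Qed.

Lemma neqmod (i s t p : nat) : (s < p)%N -> (t < p)%N -> s != t ->
  ((i + s) %% p)%N != ((i + t) %% p)%N.
Proof. by move=> hs ht hst; rewrite eqn_modDl !modn_small. Qed.

Theorem proposition6p5 (R : realFieldType) (p : nat) (r : int -> 'rV[R]_3) :
  (4 <= p)%N ->
  centroaffine_curve r ->
  closed_with_period r p ->
  (forall k : int, tau r k = 0) ->
  \rank (Smat r p) = (p - 3)%N.
Proof.
move=> hp hD [_ [hper _]] htau.
have hperq (q : nat) (k : int) : r (k + (q * p)%N%:Z) = r k.
  elim: q k => [|q IH] k; first by rewrite mul0n addr0.
  by rewrite mulSn PoszD addrA IH hper.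
have rmod (m : nat) (c : int) : r ((m %% p)%N%:Z + c) = r (m%:Z + c).
  rewrite -(hperq (m %/ p)%N); congr (r _).
  rewrite {3}(divn_eq m p) PoszD; ring.
case: p hp hper hperq rmod => [//|p] hp hper hperq rmod.
pose X : 'M[R]_(p.+1, 3) := \matrix_(i, j) r ((i.+1)%:Z) 0 j.
have hSX : Smat r p.+1 *m X = 0.
  apply/matrixP => i j; rewrite !mxE.
  under eq_bigr => c _ do rewrite !mxE.
  have hi := ltn_ord i.
  have e1 : (i + p.+1 - 1 = i + p)%N by lia.
  have hi0 : (i : nat) = ((i + 0) %% p.+1)%N by rewrite addn0 modn_small.
  have d12 : ((i + p) %% p.+1)%N != i by rewrite [X in _ != X]hi0; apply: neqmod; lia.
  have d13 : ((i + p) %% p.+1)%N != ((i + 1) %% p.+1)%N by apply: neqmod; lia.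
  have d14 : ((i + p) %% p.+1)%N != ((i + 2) %% p.+1)%N by apply: neqmod; lia.
  have d23 : (i : nat) != ((i + 1) %% p.+1)%N by rewrite [X in X != _]hi0; apply: neqmod; lia.
  have d24 : (i : nat) != ((i + 2) %% p.+1)%N by rewrite [X in X != _]hi0; apply: neqmod; lia.
  have d34 : ((i + 1) %% p.+1)%N != ((i + 2) %% p.+1)%N by apply: neqmod; lia.
  rewrite /= e1 (sum4 (fun c : 'I_p.+1 => r (Posz c.+1) 0 j)) ?ltn_pmod //.
  rewrite !inordK ?ltn_pmod //.
  have rS (m : nat) : r (Posz (m %% p.+1).+1) = r (Posz m + 1).
    by rewrite -rmod -[(m %% p.+1).+1]addn1 PoszD.
  have g1 : r (Posz (i + p) + 1) = r (Posz i.+1 - 1).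
    by rewrite -(hper (Posz i.+1 - 1)); congr (r _); lia.
  have g3 : r (Posz (i + 1) + 1) = r (Posz i.+1 + 1) by congr (r _); lia.
  have g4 : r (Posz (i + 2) + 1) = r (Posz i.+1 + 2) by congr (r _); lia.
  rewrite !rS g1 g3 g4.
  have := rec_rel j hD (htau (Posz i.+1)).
  by move=> h; rewrite -[RHS]h; ring.
have hX3 : (3 <= \rank X)%N.
  pose f : 'I_3 -> 'I_p.+1 := fun k => inord k.
  have hf : rowsub f X = \matrix_(i < 3, j < 3)
          (if i == 0 :> nat then r 1 0 j else if i == 1 :> nat then r 2 0 j else r 3 0 j).
    apply/matrixP => i j; rewrite !mxE /f inordK; last by have := ltn_ord i; lia.
    by case: i => [[|[|[|//]]] hi].
  have hu : rowsub f X \in unitmx.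
    rewrite unitmxE unitfE hf; exact: (hD 2).
  have := mxrankS (rowsub_sub f X).
  by rewrite mxrank_unit.
have hker : (\rank X + \rank (Smat r p.+1) <= p.+1)%N.
  have : (X^T <= kermx (Smat r p.+1)^T)%MS.
    by apply/sub_kermxP; rewrite -trmx_mul hSX trmx0.
  move/mxrankS; rewrite mxrank_ker !mxrank_tr.
  have := rank_leq_row (Smat r p.+1); lia.
have hS : (p.+1 - 3 <= \rank (Smat r p.+1))%N.
  pose f : 'I_(p.+1 - 3) -> 'I_p.+1 := fun k => inord k.+1.
  pose g : 'I_(p.+1 - 3) -> 'I_p.+1 := fun k => inord (k + 3).
  pose M := mxsub f g (Smat r p.+1).
  have hM a b : M a b = (if (b + 3 == a)%N then kappa r (Posz a.+2) else
       if (b + 3 == a.+1)%N then - kappa r (Posz a.+2) - kappabar r (Posz a.+2) else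
       if (b + 3 == a + 2)%N then 1 + kappabar r (Posz a.+2) else
       if (b + 3 == a + 3)%N then -1 else 0).
    have ha := ltn_ord a; have hb := ltn_ord b.
    rewrite /M !mxE /f /g !inordK; [|lia|lia].
    have m1 : ((a.+1 + p.+1 - 1) %% p.+1 = a)%N.
      rewrite (_ : (a.+1 + p.+1 - 1 = a + p.+1)%N); last by lia.
      by rewrite modnDr modn_small //; lia.
    have m3 : ((a.+1 + 1) %% p.+1 = a + 2)%N by rewrite modn_small; lia.
    have m4 : ((a.+1 + 2) %% p.+1 = a + 3)%N by rewrite modn_small; lia.
    by rewrite m1 m3 m4.
  have htr : is_trig_mx M.
    apply/is_trig_mxP => a b hab; rewrite hM.
    by repeat (case: eqP => ?; first lia).
  have hdiag a : M a a = -1.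
    rewrite hM.
    do 3 (case: eqP => ?; first lia); by rewrite eqxx.
  have hu : M \in unitmx.
    rewrite unitmxE unitfE det_trig // (eq_bigr (fun _ => -1)) // prodr_const.
    by rewrite expf_neq0 // oppr_eq0 oner_eq0.
  have := mxrank_unit hu.
  have h1 : (\rank M <= \rank (colsub g (Smat r p.+1)))%N.
    by rewrite /M mxsubrc; apply: mxrankS; apply: rowsub_sub.
  have h2 : (\rank (colsub g (Smat r p.+1)) <= \rank (Smat r p.+1))%N.
    by rewrite -{1}[Smat r p.+1]mulmx1 -mulmx_colsub; apply: mxrankM_maxl.
  lia.
lia.
Qed.
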